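(* Let $p>2$ be prime, $\mathcal{C}$ a $\mathbb{Z}_p\mathbb{Z}_{p^2}$-additive code and $C=\Phi(\mathcal{C})$. Then $$K(C)=\{\Phi(\mathbf{u})\mid \mathbf{u}\in\mathcal{C}\ \text{and}\ pP'(\mathbf{u},\mathbf{v})\in\mathcal{C}\ \text{for all}\ \mathbf{v}\in\mathcal{C}\}.$$
   Context: A $\mathbb{Z}_p\mathbb{Z}_{p^2}$-additive code is a subgroup $\mathcal{C}$ of $\mathbb{Z}_p^\alpha\times\mathbb{Z}_{p^2}^\beta$. The Gray map $\phi:\mathbb{Z}_{p^2}\to\mathbb{Z}_p^p$ is $\phi(\theta)=\theta''(1,\ldots,1)+\theta'(0,1,\ldots,p-1)$ with $\theta=\theta''p+\theta'$, $\theta',\theta''\in\{0,\ldots,p-1\}$, and $\Phi(\mathbf{x},\mathbf{y})=(\mathbf{x},\phi(y_1),\ldots,\phi(y_\beta))$. For $C\subseteq\mathbb{Z}_p^n$, the kernel is $K(C)=\{\mathbf{x}\in\mathbb{Z}_p^n\mid C+\mathbf{x}=C\}$. For $\mathbf{u},\mathbf{v}\in\mathbb{Z}_p^\alpha\times\mathbb{Z}_{p^2}^\beta$ with $u_i=u_i''p+u_i'$, $v_i=v_i''p+v_i'$ ($u_i',v_i'\in\{0,\ldots,p-1\}$) for $i>\alpha$, $pP'(\mathbf{u},\mathbf{v})$ is the vector with zeros in the first $\alpha$ coordinates and, in coordinate $i>\alpha$, the value $p(p-1)\in\mathbb{Z}_{p^2}$ if $u_i'+v_i'\ge p$ and $0$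 otherwise. *)

(* Defs.v *)
From HB Require Import structures.
From mathcomp Require Import all_boot all_order all_algebra.
Set Implicit Arguments. Unset Strict Implicit. Unset Printing Implicit Defensive.
Import GRing.Theory.
Local Open Scope ring_scope.

Notation ambient p alpha beta :=
  ('rV['Z_p]_alpha * 'rV['Z_(p ^ 2)%N]_beta)%type.

Definition is_additive_code (p alpha beta : nat) (C : {set ambient p alpha beta}) :=
  (0 \in C) /\ (forall u v, u \in C -> v \in C -> u - v \in C).

(* Gray map phi : Z_{p^2} -> Z_p^p,
   phi(theta) = theta''(1,...,1) + theta'(0,1,...,p-1), theta = theta'' p + theta'. *)
Definition gray (p : nat) (theta : 'Z_(p ^ 2)%N) : 'rV['Z_p]_p :=
  \row_(j < p) (((val theta %/ p)%N + (val theta %% p)%N * (val j))%:R : 'Z_p).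

Definition Phi (p alpha beta : nat) (u : ambient p alpha beta)
  : 'rV['Z_p]_(alpha + beta * p) :=
  row_mx u.1 (mxvec (\matrix_(i < beta) gray (u.2 ord0 i))).

Definition kernel (p n : nat) (C : {set 'rV['Z_p]_n}) : {set 'rV['Z_p]_n} :=
  [set x | [set c + x | c in C] == C].

Definition pP' (p alpha beta : nat) (u v : ambient p alpha beta)
  : ambient p alpha beta :=
  (0, \row_(i < beta)
        (if (p <= (val (u.2 ord0 i) %% p) + (val (v.2 ord0 i) %% p))%N
         then ((p * (p - 1))%N%:R : 'Z_(p ^ 2)%N) else 0)).

Arguments Phi {p alpha beta} u.
Arguments pP' {p alpha beta} u v.
Arguments kernel {p n} C.

(* Main.v *)
Require Import Defs.
From HB Require Import structures.
From mathcomp Require Import all_boot all_order all_algebra.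
From mathcomp Require Import zify.
Import GRing.Theory.
Lemma nat_core (p A B : nat) (hp : (0 < p)%N) :
  let Y := (A + B + (if (p <= A %% p + B %% p)%N then p * (p - 1) else 0))%N in
  (Y %% p = (A %% p + B %% p) %% p /\ (Y %/ p) %% p = (A %/ p + B %/ p) %% p)%N.
Proof.
move=> Y.
have hA := ltn_pmod A hp; have hB := ltn_pmod B hp.
have eY : Y = ((A %/ p + B %/ p + (if (p <= A %% p + B %% p)%N then p - 1 else 0)) * p
               + (A %% p + B %% p))%N.
  rewrite /Y {1}(divn_eq A p) {1}(divn_eq B p).
  move: (A %/ p) (A %% p) (B %/ p) (B %% p) hA hB => a2 a1 b2 b1 h1 h2.
  case: ifP => _; nia.
rewrite eY modnMDl divnMDl //; split => //.
case: ifP => he.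
  have -> : ((A %% p + B %% p) %/ p = 1)%N.
    rewrite (_ : (A %% p + B %% p = 1 * p + (A %% p + B %% p - p))%N); last first.
      move: (A %% p) (B %% p) hA hB he => a1 b1; lia.
    rewrite divnMDl // divn_small //.
    clear eY; move: (A %% p) (B %% p) hA hB he => a1 b1; clear Y; lia.
  by rewrite -addnA subnK ?modnDr.
have hs : (A %% p + B %% p < p)%N by rewrite ltnNge he.
by rewrite (divn_small hs) !addn0.
Qed.

Local Open Scope ring_scope.

Lemma natZp (p : nat) (hp : (1 < p)%N) (n : nat) : (n%:R : 'Z_p) = (n %% p)%N%:R.
Proof. by apply: val_inj; rewrite /= !val_Zp_nat // modn_mod. Qed.

Lemma valZ2D (p : nat) (hp : (1 < p)%N) (a b : 'Z_(p ^ 2)%N) :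
  val (a + b) = ((val a + val b) %% p ^ 2)%N.
Proof.
have h : (1 < p ^ 2)%N by rewrite (ltn_trans hp) // -{1}(expn1 p) ltn_exp2l.
by rewrite /=; congr (_ %% _)%N; exact: Zp_cast.
Qed.

Lemma mod_p2_mod (p Y : nat) : ((Y %% p ^ 2) %% p = Y %% p)%N.
Proof. by rewrite modn_dvdm // expnS dvdn_mulr. Qed.

Lemma mod_p2_div (p Y : nat) (hp : (0 < p)%N) :
  ((Y %% p ^ 2) %/ p %% p = (Y %/ p) %% p)%N.
Proof.
rewrite {2}(divn_eq Y (p ^ 2)) expnS expn1 mulnA divnMDl //.
by rewrite modnMDl.
Qed.


Definition cP (p : nat) (a b : 'Z_(p ^ 2)%N) : 'Z_(p ^ 2)%N :=
  if (p <= val a %% p + val b %% p)%N then (p * (p - 1))%N%:R else 0.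
Arguments cP {p} a b.

Lemma p2gt1 (p : nat) (hp : (1 < p)%N) : (1 < p ^ 2)%N.
Proof. by rewrite (ltn_trans hp) // -{1}(expn1 p) ltn_exp2l. Qed.

Lemma val_cP (p : nat) (hp : (1 < p)%N) (a b : 'Z_(p ^ 2)%N) :
  val (cP a b) = if (p <= val a %% p + val b %% p)%N then (p * (p - 1))%N else 0%N.
Proof.
rewrite /cP; case: ifP => _ //.
change (nat_of_ord ((p * (p - 1))%N%:R : 'Z_(p ^ 2)%N) = (p * (p - 1))%N).
have hp0 : (0 < p)%N by apply: ltn_trans hp.
rewrite val_Zp_nat ?p2gt1 // modn_small //.
by rewrite expnS expn1 ltn_pmul2l // subn1 ltn_predL.
Qed.

Lemma gray_add (p : nat) (hp : (1 < p)%N) (a b : 'Z_(p ^ 2)%N) :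
  gray a + gray b = gray (a + b + cP a b).
Proof.
have hp0 : (0 < p)%N by apply: ltn_trans hp.
apply/rowP => j; rewrite !mxE !valZ2D // modnDml val_cP //.
have [h1 h2] := nat_core p (val a) (val b) hp0.

rewrite [in RHS]natrD [in RHS]natrM.
rewrite (natZp p hp (_ %/ p)) mod_p2_div // h2 -(natZp p hp).
rewrite (natZp p hp (_ %% p)) mod_p2_mod h1 -(natZp p hp).
rewrite -(natZp p hp (val a %% p + val b %% p))%N !natrD !natrM mulrDl.
by rewrite addrACA.
Qed.

Lemma Phi_add (p alpha beta : nat) (hp : (1 < p)%N) (u v : ambient p alpha beta) :
  Phi u + Phi v = Phi (u + v + pP' u v).
Proof.
rewrite /Phi add_row_mx -linearD /=.
congr row_mx; first by rewrite addr0.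
congr mxvec; apply/matrixP => i j.
have := gray_add p hp (u.2 ord0 i) (v.2 ord0 i).
move/rowP/(_ j); rewrite /cP !mxE => H.
exact: H.
Qed.

Lemma valZ2_lt (p : nat) (hp : (1 < p)%N) (a : 'Z_(p ^ 2)%N) : (val a < p ^ 2)%N.
Proof. apply: leq_trans (ltn_ord a) _; by rewrite Zp_cast ?p2gt1. Qed.

Lemma valZp_nat (p : nat) (hp : (1 < p)%N) (n : nat) :
  nat_of_ord (n%:R : 'Z_p) = (n %% p)%N.
Proof. exact: val_Zp_nat. Qed.

Lemma gray_inj (p : nat) (hp : (1 < p)%N) : injective (@gray p).
Proof.
have hp0 : (0 < p)%N by apply: ltn_trans hp.
move=> a b /rowP H.
have H0 := congr1 val (H (Ordinal hp0)).
have H1 := congr1 val (H (Ordinal hp)).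
rewrite !mxE /= !valZp_nat // !muln0 !addn0 in H0.
rewrite !mxE /= !valZp_nat // !muln1 in H1.
have la := valZ2_lt p hp a; have lb := valZ2_lt p hp b.
have ea : (val a %/ p < p)%N by rewrite ltn_divLR // -expnSr.
have eb : (val b %/ p < p)%N by rewrite ltn_divLR // -expnSr.
rewrite !modn_small // in H0.
rewrite H0 in H1; move/eqP: H1; rewrite eqn_modDl => /eqP.
rewrite !modn_mod => H2.
apply: val_inj; rewrite /= (divn_eq (val a) p) (divn_eq (val b) p).
by rewrite H0 H2.
Qed.

Lemma Phi_inj (p alpha beta : nat) (hp : (1 < p)%N) :
  injective (@Phi p alpha beta).
Proof.
move=> [u1 u2] [v1 v2]; rewrite /Phi /= => /eq_row_mx [-> /(can_inj mxvecK) H].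
congr pair; apply/rowP => i.
have := congr1 (row i) H; rewrite !rowK => /(gray_inj p hp) E.
exact: E.
Qed.

Lemma pP'00 (p alpha beta : nat) (hp : (0 < p)%N) :
  pP' (0 : ambient p alpha beta) 0 = 0.
Proof.
rewrite /pP'; congr pair; apply/rowP => i; rewrite !mxE /= mod0n.
by rewrite leqNgt hp.
Qed.

Lemma Phi0 (p alpha beta : nat) (hp : (1 < p)%N) :
  Phi (0 : ambient p alpha beta) = 0.
Proof.
have hp0 : (0 < p)%N by apply: ltn_trans hp.
have := @Phi_add p alpha beta hp 0 0.
rewrite pP'00 // !addr0 => /eqP; rewrite -subr_eq0 addrK => /eqP //.
Qed.

Theorem lemma9 (p alpha beta : nat) (hp : prime p) (hp2 : (2 < p)%N)
  (C : {set ambient p alpha beta}) (hC : is_additive_code C) :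
  kernel (Phi @: C) =
  [set Phi u | u in C & [forall v in C, pP' u v \in C]].
Proof.
have hp1 : (1 < p)%N by apply: prime_gt1.
case: hC => C0 CB.
have CN : forall v, v \in C -> - v \in C by move=> v vC; rewrite -sub0r; apply: CB.
have CD : forall u v, u \in C -> v \in C -> u + v \in C.
  by move=> u v uC vC; rewrite -[v]opprK; apply: CB => //; apply: CN.
have key : forall u v, u \in C -> v \in C ->
    (Phi u + Phi v \in Phi @: C) = (pP' u v \in C).
  move=> u v uC vC; rewrite Phi_add //; apply/imsetP/idP.
    case=> w wC /(@Phi_inj p alpha beta hp1) E.
    have -> : pP' u v = w - (u + v) by rewrite -E [u + v + _]addrC addrK.
    by apply: (CB) => //; apply: (CD).
  by move=> h; exists (u + v + pP' u v) => //; apply: (CD) => //; apply: (CD).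
apply/setP => x; rewrite /kernel inE; apply/idP/idP.
  move/eqP => E.
  have xS : x \in Phi @: C.
    rewrite -E; apply/imsetP; exists 0; last by rewrite add0r.
    by apply/imsetP; exists 0 => //; rewrite Phi0.
  case/imsetP: xS => u uC xE; subst x.
  apply/imsetP; exists u; rewrite ?inE ?uC //=.
  apply/forall_inP => v vC; rewrite -key // addrC -E.
  by apply: imset_f; apply: imset_f.
case/imsetP => u; rewrite inE => /andP [uC /forall_inP H] ->.
have inj : injective (fun c => c + Phi u) by move=> a b; apply: (addIr (Phi u)).
rewrite eqEcard (card_imset _ inj).
rewrite leqnn andbT; apply/subsetP => y /imsetP [c /imsetP [v vC ->] ->].
by rewrite addrC key //; apply: H.
Qed.
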